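(* For each integer $N>6$ there exists $r>0$ such that for every regular hyperbolic $N$-gon $P$ (in the hyperbolic plane $\mathbb{H}^2$ of curvature $-1$) of radius $<r$, any two intersecting diagonals of $P$, each of length at most $\lfloor (N-1)/6\rfloor$, have internal angle $>2\pi/3$.
   Context: The \emph{radius} of a regular polygon is the distance from its centre to any vertex. For a regular polygon $P$, a \emph{diagonal} is a geodesic segment connecting two (possibly consecutive) vertices of $P$. A \emph{segment} of $P$ is the smaller of the two pieces obtained by cutting $P$ along a diagonal (if the diagonal is an edge, the segment is that edge); the \emph{length} of a segment is the number of edges of $P$ it contains, and the \emph{length} of a diagonal is the length of the segment it subtends. If $P$ is an $N$-gon and $d_1,d_2$ are diagonals of length less than $N/2$ intersecting at a point $p$ (possibly a common endpoint), exactly one connected component of $P\setminus(d_1\cup d_2)$ contains the centre of $P$; the angle at $p$ between $d_1$ and $d_2$ lying in this component is the \emph{internal angle} between $d_1$ and $d_2$. *)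

(* Defs.v *)
(* hyperboloid model of the hyperbolic plane H^2 (curvature -1). *)
From Stdlib Require Import Reals Lra Lia List.
Open Scope R_scope.

Record pt := Pt { x0 : R; x1 : R; x2 : R }.

Definition lor (x y : pt) : R := - x0 x * x0 y + x1 x * x1 y + x2 x * x2 y.

Definition padd (x y : pt) : pt := Pt (x0 x + x0 y) (x1 x + x1 y) (x2 x + x2 y).
Definition pscal (a : R) (x : pt) : pt := Pt (a * x0 x) (a * x1 x) (a * x2 x).

Definition inH2 (x : pt) : Prop := lor x x = -1 /\ 0 < x0 x.

(** Geodesic segment [u,v] in the hyperboloid model:
    points of H^2 in the positive cone spanned by u and v. *)
Definition geodesic_segment (u v : pt) (x : pt) : Prop :=
  inH2 x /\ exists a b : R, 0 <= a /\ 0 <= b /\ x = padd (pscal a u) (pscal b v).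

Definition frame (c e1 e2 : pt) : Prop :=
  inH2 c /\ lor c e1 = 0 /\ lor c e2 = 0 /\
  lor e1 e1 = 1 /\ lor e2 e2 = 1 /\ lor e1 e2 = 0.

(** The k-th vertex of the regular N-gon with centre c, radius rho, in the frame
    (c;e1,e2): the point at distance rho from c in direction
    cos(2 pi k/N) e1 + sin(2 pi k/N) e2  (exponential map at c).
    Every regular hyperbolic N-gon arises this way for some frame and rho > 0. *)
Definition reg_vertex (N : nat) (c e1 e2 : pt) (rho : R) (k : nat) : pt :=
  padd (pscal (cosh rho) c)
       (pscal (sinh rho)
          (padd (pscal (cos (2 * PI * INR k / INR N)) e1)
                (pscal (sin (2 * PI * INR k / INR N)) e2))).

(** Length of the diagonal joining vertices i and j (i <> j, i,j < N): number of
    edges of the smaller of the two pieces cut off. *)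
Definition diag_length (N i j : nat) : nat :=
  let d := if (i <=? j)%nat then (j - i)%nat else (i - j)%nat in
  Nat.min d (N - d).

(** Unit tangent direction (unnormalised) at p of the geodesic from p to q. *)
Definition tang (p q : pt) : pt := padd q (pscal (lor p q) p).

Definition det3 (a b c : pt) : R :=
  x0 a * (x1 b * x2 c - x2 b * x1 c)
  - x1 a * (x0 b * x2 c - x2 b * x0 c)
  + x2 a * (x0 b * x1 c - x1 b * x0 c).

Definition tangle (u w : pt) : R := acos (lor u w / sqrt (lor u u * lor w w)).

(** Oriented angle in [0, 2 pi) from u to w in the tangent plane at p, the
    orientation of T_p H^2 being given by the area form det(p, . , .). *)
Definition oangle (p u w : pt) : R :=
  if Rle_dec 0 (det3 p u w) then tangle u w
  else if Req_EM_T (tangle u w) 0 then 0 else 2 * PI - tangle u w.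

Definition pt_eq_dec (x y : pt) : {x = y} + {x <> y}.
Proof.
  destruct x as [a b c], y as [a' b' c'].
  destruct (Req_EM_T a a'); [|right; congruence].
  destruct (Req_EM_T b b'); [|right; congruence].
  destruct (Req_EM_T c c'); [|right; congruence].
  left; subst; reflexivity.
Defined.

Definition list_min (l : list R) : R :=
  match l with nil => 0 | x :: t => fold_right Rmin x t end.
Definition list_max (l : list R) : R :=
  match l with nil => 0 | x :: t => fold_right Rmax x t end.

(** The rays from p along the diagonals (towards those
    endpoints different from p) cut the tangent plane at p into angular sectors;
    the internal angle is the size of the sector containing the direction of the
    centre c (i.e. the angle at p between d1 and d2 on the side of the
    component of P \ (d1 u d2) containing the centre).  Measuring oriented
    angles alpha from the centre direction, this sector has size
    min alpha + (2 pi - max alpha). *)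
Definition internal_angle (c p a1 b1 a2 b2 : pt) : R :=
  let ends := filter (fun q => if pt_eq_dec q p then false else true)
                     (a1 :: b1 :: a2 :: b2 :: nil) in
  let alphas := map (fun q => oangle p (tang p c) (tang p q)) ends in
  list_min alphas + (2 * PI - list_max alphas).

(* Main.v *)
Require Import Defs.
From Stdlib Require Import Reals Lra Lia List Psatz.
Open Scope R_scope.
From Stdlib Require Import Psatz.

Lemma lor_sym x y : lor x y = lor y x.
Proof. destruct x, y; unfold lor; simpl; ring. Qed.
Lemma lor_padd_l x y z : lor (padd x y) z = lor x z + lor y z.
Proof. destruct x, y, z; unfold lor; simpl; ring. Qed.
Lemma lor_padd_r x y z : lor z (padd x y) = lor z x + lor z y.
Proof. destruct x, y, z; unfold lor; simpl; ring. Qed.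
Lemma lor_pscal_l a x z : lor (pscal a x) z = a * lor x z.
Proof. destruct x, z; unfold lor; simpl; ring. Qed.
Lemma lor_pscal_r a x z : lor z (pscal a x) = a * lor z x.
Proof. destruct x, z; unfold lor; simpl; ring. Qed.

Lemma lor_tang p x y : lor p p = -1 ->
  lor (tang p x) (tang p y) = lor x y + lor p x * lor p y.
Proof.
  intros H. unfold tang.
  rewrite lor_padd_l, !lor_padd_r, !lor_pscal_l, !lor_pscal_r, H.
  rewrite (lor_sym x p). ring.
Qed.

Lemma padd_comm x y : padd x y = padd y x.
Proof. destruct x, y; unfold padd; simpl; f_equal; ring. Qed.

Lemma seg_sym A B p : geodesic_segment A B p -> geodesic_segment B A p.
Proof.
  intros [H [a [b [Ha [Hb E]]]]]. split; [exact H|].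
  exists b, a. repeat split; auto. rewrite E; apply padd_comm.
Qed.

Lemma acos_gt x : x < 1/2 -> acos x > PI/3.
Proof.
  intros H. pose proof PI_RGT_0.
  destruct (Rle_dec x (-1)) as [h|h].
  - unfold acos. destruct (Rle_dec x (-1)); [lra|contradiction].
  - assert (Hr : -1 <= x <= 1) by lra.
    pose proof (acos_bound x).
    destruct (Rle_or_lt (acos x) (PI/3)) as [h2|h2]; [|lra].
    exfalso.
    assert (Hc : cos (PI/3) <= cos (acos x)).
    { destruct (Req_dec (acos x) (PI/3)) as [e|e]; [rewrite e; lra|].
      left; apply cos_decreasing_1; lra. }
    rewrite cos_acos in Hc by lra. rewrite cos_PI3 in Hc. lra.
Qed.

Lemma div_sqrt_lt_half (x y : R) : (0 < x -> 4 * (x*x) < y) -> x / sqrt y < 1/2.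
Proof.
  intros H.
  destruct (Rle_or_lt x 0) as [Hx|Hx].
  - destruct (Req_dec (sqrt y) 0) as [E|E].
    + rewrite E; unfold Rdiv; rewrite Rinv_0; lra.
    + assert (0 < sqrt y) by (pose proof (sqrt_pos y); lra).
      assert (0 < / sqrt y) by (apply Rinv_0_lt_compat; lra).
      unfold Rdiv. nra.
  - specialize (H Hx).
    assert (Hs : 2 * x < sqrt y).
    { rewrite <- (sqrt_square (2*x)) by lra. apply sqrt_lt_1; nra. }
    apply (Rmult_lt_reg_r (sqrt y)); [lra|].
    unfold Rdiv; rewrite Rmult_assoc, Rinv_l by lra. lra.
Qed.

Lemma core (S K a b ch : R) :
  ch * ch = 1 + S -> 0 <= S -> 0 <= K -> (1 + S) * K < 1/2 ->
  0 <= a -> 0 <= b -> 0 < ch ->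
  a*a + b*b + 2*a*b*(1 + S*K) = 1 ->
  (-ch + (a+b)*ch*(a + b*(1+S*K))) /
   sqrt ((-1 + ((a+b)*ch)*((a+b)*ch)) * (-1 + (a + b*(1+S*K))*(a + b*(1+S*K)))) < 1/2.
Proof.
  intros Hch HS HK HSK Ha Hb Hc0 Hc.
  apply div_sqrt_lt_half. intros Hx.
  assert (Ex : -ch + (a+b)*ch*(a + b*(1+S*K)) = ch * (S*K*b*(b-a))) by nra.
  assert (Enu : -1 + ((a+b)*ch)*((a+b)*ch) = S*((a+b)*(a+b) - 2*a*b*K)) by nra.
  assert (Enw : -1 + (a + b*(1+S*K))*(a + b*(1+S*K)) = S*K*(b*b)*(2+S*K)) by nra.
  rewrite Ex in Hx |- *. rewrite Enu, Enw.
  assert (HT : 0 < S*K*b*(b-a)) by (apply (Rmult_lt_reg_l ch); nra).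
  assert (0 < S) by (destruct (Req_dec S 0); [subst; nra| lra]).
  assert (0 < K) by (destruct (Req_dec K 0); [subst; nra| lra]).
  assert (0 < b) by (destruct (Req_dec b 0); [subst; nra| lra]).
  assert (0 <= S*K*b) by (apply Rmult_le_pos; [apply Rmult_le_pos|]; lra).
  assert (a < b) by (destruct (Rle_or_lt b a) as [h|h]; [nra|lra]).
  assert (Hbr : 0 < ((a+b)*(a+b) - 2*a*b*K)*(2+S*K) - 4*(1+S)*K*((b-a)*(b-a))).
  { replace (((a+b)*(a+b) - 2*a*b*K)*(2+S*K) - 4*(1+S)*K*((b-a)*(b-a)))
      with ((b-a)*(b-a)*(2 + S*K - 4*(1+S)*K) + (2+S*K)*2*(a*b)*(2-K)) by ring.
    assert (0 < (b-a)*(b-a)) by nra.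
    assert (0 <= a*b) by nra.
    assert (0 <= (2+S*K)*2*(a*b)*(2-K)).
    { assert (0 <= S*K) by (apply Rmult_le_pos; lra).
      assert (K < 1/2) by nra.
      apply Rmult_le_pos; [|lra]. apply Rmult_le_pos; [|lra]. lra. }
    assert (0 <= S*K) by (apply Rmult_le_pos; lra).
    assert (0 < (b-a)*(b-a)*(2 + S*K - 4*(1+S)*K)) by (apply Rmult_lt_0_compat; lra).
    lra. }
  assert (Hpos : 0 < S*S*K*(b*b)) by (repeat apply Rmult_lt_0_compat; lra).
  apply Rminus_gt_0_lt.
  replace (S * ((a + b) * (a + b) - 2 * a * b * K) * (S * K * (b * b) * (2 + S * K)) -
     4 * (ch * (S * K * b * (b - a)) * (ch * (S * K * b * (b - a)))))
    with (S*S*K*(b*b) * (((a+b)*(a+b) - 2*a*b*K)*(2+S*K) - 4*(ch*ch)*K*((b-a)*(b-a)))) by ring.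
  rewrite Hch. apply Rmult_lt_0_compat; lra.
Qed.

Lemma angle_key (c A B p : pt) (S K ch : R) :
  lor c c = -1 -> lor c A = -ch -> lor c B = -ch -> lor A A = -1 -> lor B B = -1 ->
  lor A B = -(1 + S*K) -> ch * ch = 1 + S -> 0 <= S -> 0 <= K -> (1+S)*K < 1/2 -> 0 < ch ->
  geodesic_segment A B p ->
  tangle (tang p c) (tang p A) > PI/3.
Proof.
  intros Hcc HcA HcB HAA HBB HAB Hch HS HK HSK Hc0 [[Hpp _] [a [b [Ha [Hb E]]]]].
  unfold tangle. apply acos_gt.
  rewrite !lor_tang by exact Hpp.
  assert (EpA : lor p A = -(a + b*(1+S*K))).
  { rewrite E, lor_padd_l, !lor_pscal_l, (lor_sym B A), HAA, HAB. ring. }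
  assert (Epc : lor p c = -((a+b)*ch)).
  { rewrite E, lor_padd_l, !lor_pscal_l, (lor_sym A c), (lor_sym B c), HcA, HcB. ring. }
  assert (Hcon : a*a + b*b + 2*a*b*(1 + S*K) = 1).
  { rewrite E in Hpp. rewrite lor_padd_l, !lor_padd_r, !lor_pscal_l, !lor_pscal_r in Hpp.
    rewrite (lor_sym B A), HAA, HBB, HAB in Hpp. lra. }
  rewrite EpA, Epc, HcA, Hcc, HAA.
  replace (-ch + -((a+b)*ch) * -(a + b*(1+S*K))) with (-ch + (a+b)*ch*(a + b*(1+S*K))) by ring.
  replace (-1 + -((a+b)*ch) * -((a+b)*ch)) with (-1 + ((a+b)*ch)*((a+b)*ch)) by ring.
  replace (-1 + -(a + b*(1+S*K)) * -(a + b*(1+S*K))) with (-1 + (a + b*(1+S*K))*(a + b*(1+S*K))) by ring.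
  apply core; auto.
Qed.

Lemma cosh_sinh_id x : cosh x * cosh x = 1 + sinh x * sinh x.
Proof.
  unfold cosh, sinh. rewrite exp_Ropp. pose proof (exp_pos x).
  field. lra.
Qed.

Lemma cosh_pos' x : 0 < cosh x.
Proof. unfold cosh. pose proof (exp_pos x); pose proof (exp_pos (-x)). lra. Qed.

Section V.
Variables (N : nat) (c e1 e2 : pt) (rho : R).
Hypothesis Hf : frame c e1 e2.
Let th k := 2 * PI * INR k / INR N.

Lemma lor_c_v k : lor c (reg_vertex N c e1 e2 rho k) = - cosh rho.
Proof.
  destruct Hf as [[Hcc _] [H1 [H2 _]]].
  unfold reg_vertex. rewrite !lor_padd_r, !lor_pscal_r, !lor_padd_r, !lor_pscal_r, Hcc, H1, H2. ring.
Qed.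

Lemma lor_v_v i j : lor (reg_vertex N c e1 e2 rho i) (reg_vertex N c e1 e2 rho j)
  = -(1 + (sinh rho * sinh rho) * (1 - cos (th i - th j))).
Proof.
  destruct Hf as [[Hcc _] [H1 [H2 [H11 [H22 H12]]]]].
  unfold reg_vertex. rewrite cos_minus.
  rewrite !lor_padd_l, !lor_pscal_l, !lor_padd_r, !lor_pscal_r, !lor_padd_l, !lor_pscal_l.
  repeat (rewrite ?lor_padd_l, ?lor_pscal_l, ?lor_padd_r, ?lor_pscal_r).
  rewrite (lor_sym e1 c), (lor_sym e2 c), (lor_sym e2 e1), Hcc, H1, H2, H11, H22, H12.
  pose proof (cosh_sinh_id rho). unfold th. nra.
Qed.
End V.

Lemma cos_mono x y : 0 <= x -> x <= y -> y <= PI -> cos y <= cos x.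
Proof.
  intros. destruct (Req_dec x y) as [e|e]; [subst; lra|].
  left; apply cos_decreasing_1; lra.
Qed.

Lemma cos_d (N d m : nat) : (d <= N)%nat -> (Nat.min d (N - d) <= m)%nat -> (6*m < N)%nat ->
  cos (2*PI*INR m/INR N) <= cos (2*PI*INR d/INR N).
Proof.
  intros Hd Hm H6. pose proof PI_RGT_0.
  assert (HN : 0 < INR N) by (apply lt_0_INR; lia).
  assert (Hm2 : 2 * INR m <= INR N).
  { replace 2 with (INR 2) by (simpl; lra). rewrite <- mult_INR. apply le_INR. lia. }
  assert (HmPI : 2*PI*INR m/INR N <= PI).
  { apply (Rmult_le_reg_r (INR N)); [lra|]. unfold Rdiv. rewrite Rmult_assoc, Rinv_l by lra. nra. }
  assert (H0m : 0 <= 2*PI*INR m/INR N).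
  { unfold Rdiv. apply Rmult_le_pos; [| left; apply Rinv_0_lt_compat; lra].
    pose proof (pos_INR m). nra. }
  destruct (Nat.le_ge_cases d (N - d)) as [h|h].
  - rewrite Nat.min_l in Hm by exact h.
    apply cos_mono; auto.
    + unfold Rdiv. apply Rmult_le_pos; [| left; apply Rinv_0_lt_compat; lra].
      pose proof (pos_INR d). nra.
    + unfold Rdiv. apply Rmult_le_compat_r; [left; apply Rinv_0_lt_compat; lra|].
      apply le_INR in Hm. nra.
  - rewrite Nat.min_r in Hm by exact h.
    assert (E : 2*PI*INR d/INR N = 2*PI - 2*PI*INR (N-d)/INR N).
    { rewrite minus_INR by exact Hd. field. lra. }
    rewrite E. rewrite cos_minus, cos_2PI, sin_2PI.
    replace (1 * cos (2 * PI * INR (N - d) / INR N) + 0 * sin (2 * PI * INR (N - d) / INR N))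
      with (cos (2 * PI * INR (N - d) / INR N)) by ring.
    apply cos_mono; auto.
    + unfold Rdiv. apply Rmult_le_pos; [| left; apply Rinv_0_lt_compat; lra].
      pose proof (pos_INR (N-d)). nra.
    + unfold Rdiv. apply Rmult_le_compat_r; [left; apply Rinv_0_lt_compat; lra|].
      apply le_INR in Hm. nra.
Qed.

Lemma cos_diag (N i j m : nat) : (i < N)%nat -> (j < N)%nat -> (diag_length N i j <= m)%nat ->
  (6*m < N)%nat ->
  cos (2*PI*INR m/INR N) <= cos (2*PI*INR i/INR N - 2*PI*INR j/INR N).
Proof.
  intros Hi Hj Hd H6.
  assert (HN : 0 < INR N) by (apply lt_0_INR; lia).
  unfold diag_length in Hd.
  destruct (Nat.leb_spec i j) as [h|h].
  - replace (2*PI*INR i/INR N - 2*PI*INR j/INR N) with (- (2*PI*INR (j - i)/INR N)).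
    + rewrite cos_neg. apply cos_d; auto; lia.
    + rewrite minus_INR by exact h. field. lra.
  - replace (2*PI*INR i/INR N - 2*PI*INR j/INR N) with (2*PI*INR (i - j)/INR N).
    + apply cos_d; auto; lia.
    + rewrite minus_INR by lia. field. lra.
Qed.

Lemma tangle_le u w : tangle u w <= PI.
Proof. unfold tangle. apply acos_bound. Qed.

Lemma oangle_bounds p u w : tangle u w > PI/3 ->
  PI/3 < oangle p u w < 5*PI/3.
Proof.
  intros H. pose proof (tangle_le u w). pose proof PI_RGT_0.
  unfold oangle. destruct (Rle_dec 0 (det3 p u w)); [lra|].
  destruct (Req_EM_T (tangle u w) 0); lra.
Qed.

Lemma fold_min_gt lo x t : lo < x -> (forall y, In y t -> lo < y) -> lo < fold_right Rmin x t.
Proof.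
  intros Hx; induction t as [|y t IH]; intros H; simpl; auto.
  apply Rmin_glb_lt; [apply H; left; auto| apply IH; intros; apply H; right; auto].
Qed.

Lemma fold_max_lt hi x t : x < hi -> (forall y, In y t -> y < hi) -> fold_right Rmax x t < hi.
Proof.
  intros Hx; induction t as [|y t IH]; intros H; simpl; auto.
  apply Rmax_lub_lt; [apply H; left; auto| apply IH; intros; apply H; right; auto].
Qed.

Lemma list_bound (l : list R) : (forall y : R, In y l -> PI/3 < y < 5*PI/3) ->
  Defs.list_min l + (2 * PI - Defs.list_max l) > 2 * PI / 3.
Proof.
  intros H. pose proof PI_RGT_0. destruct l as [|x t].
  - simpl. lra.
  - simpl.
    assert (PI/3 < fold_right Rmin x t).
    { apply fold_min_gt; [apply H; left; auto|intros; apply H; right; auto]. }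
    assert (fold_right Rmax x t < 5*PI/3).
    { apply fold_max_lt; [apply H; left; auto|intros; apply H; right; auto]. }
    lra.
Qed.


Lemma pair_angle N c e1 e2 rho K0 i j p :
  frame c e1 e2 -> (1 + sinh rho * sinh rho) * K0 < 1/2 ->
  1 - cos (2*PI*INR i/INR N - 2*PI*INR j/INR N) <= K0 ->
  geodesic_segment (reg_vertex N c e1 e2 rho i) (reg_vertex N c e1 e2 rho j) p ->
  tangle (tang p c) (tang p (reg_vertex N c e1 e2 rho i)) > PI/3 /\
  tangle (tang p c) (tang p (reg_vertex N c e1 e2 rho j)) > PI/3.
Proof.
  intros Hf HK0 Hc Hs.
  set (S := sinh rho * sinh rho) in *.
  assert (HS : 0 <= S) by (unfold S; nra).
  set (K := 1 - cos (2*PI*INR i/INR N - 2*PI*INR j/INR N)) in *.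
  assert (HK : 0 <= K) by (unfold K; pose proof (COS_bound (2*PI*INR i/INR N - 2*PI*INR j/INR N)); lra).
  assert (HSK : (1 + S) * K < 1/2).
  { apply Rle_lt_trans with ((1+S)*K0); [apply Rmult_le_compat_l; lra| exact HK0]. }
  assert (Hcc : lor c c = -1) by (destruct Hf as [[h _] _]; exact h).
  pose proof (cosh_sinh_id rho) as Hch. pose proof (cosh_pos' rho) as Hc0.
  assert (Hvv : forall k, lor (reg_vertex N c e1 e2 rho k) (reg_vertex N c e1 e2 rho k) = -1).
  { intros k. rewrite lor_v_v by exact Hf. cbv beta. rewrite Rminus_diag, cos_0. ring. }
  assert (HAB : lor (reg_vertex N c e1 e2 rho i) (reg_vertex N c e1 e2 rho j) = -(1 + S*K)).
  { rewrite lor_v_v by exact Hf. cbv beta. reflexivity. }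
  split.
  - apply (angle_key c _ (reg_vertex N c e1 e2 rho j) p S K (cosh rho)); auto;
      try (apply lor_c_v; exact Hf).
  - apply (angle_key c _ (reg_vertex N c e1 e2 rho i) p S K (cosh rho)); auto;
      try (apply lor_c_v; exact Hf).
    + rewrite lor_sym; exact HAB.
    + apply seg_sym; exact Hs.
Qed.

Theorem proposition3p5 :
  forall N : nat, (N > 6)%nat ->
  exists r : R, 0 < r /\
    forall (c e1 e2 : pt) (rho : R),
      frame c e1 e2 -> 0 < rho -> rho < r ->
      forall i j k l : nat,
        (i < N)%nat -> (j < N)%nat -> (k < N)%nat -> (l < N)%nat ->
        i <> j -> k <> l ->
        ~ ((i = k /\ j = l) \/ (i = l /\ j = k)) ->
        (diag_length N i j <= (N - 1) / 6)%nat ->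
        (diag_length N k l <= (N - 1) / 6)%nat ->
        forall p : pt,
          geodesic_segment (reg_vertex N c e1 e2 rho i) (reg_vertex N c e1 e2 rho j) p ->
          geodesic_segment (reg_vertex N c e1 e2 rho k) (reg_vertex N c e1 e2 rho l) p ->
          internal_angle c p
            (reg_vertex N c e1 e2 rho i) (reg_vertex N c e1 e2 rho j)
            (reg_vertex N c e1 e2 rho k) (reg_vertex N c e1 e2 rho l)
          > 2 * PI / 3.
Proof.
  intros N HN.
  set (m := ((N - 1) / 6)%nat).
  assert (H6 : (6 * m < N)%nat).
  { pose proof (Nat.mul_div_le (N-1) 6). unfold m. lia. }
  pose proof PI_RGT_0 as Hpi.
  assert (HNr : 0 < INR N) by (apply lt_0_INR; lia).
  set (x := 2*PI*INR m/INR N).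
  assert (Hx0 : 0 <= x).
  { unfold x, Rdiv. apply Rmult_le_pos; [| left; apply Rinv_0_lt_compat; lra].
    pose proof (pos_INR m). nra. }
  assert (Hx3 : x < PI/3).
  { unfold x. apply (Rmult_lt_reg_r (INR N)); [lra|].
    unfold Rdiv. rewrite Rmult_assoc, Rinv_l by lra.
    assert (6 * INR m < INR N).
    { replace 6 with (INR 6) by (simpl; lra). rewrite <- mult_INR. apply lt_INR. lia. }
    nra. }
  assert (Hcx : 1/2 < cos x).
  { rewrite <- cos_PI3. apply cos_decreasing_1; lra. }
  set (K0 := 1 - cos x).
  assert (HK0 : 0 <= K0) by (unfold K0; pose proof (COS_bound x); lra).
  assert (HK1 : K0 < 1/2) by (unfold K0; lra).
  set (eps := Rmin 1 ((1/2 - K0)/2)).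
  assert (Heps : 0 < eps) by (unfold eps; apply Rmin_glb_lt; lra).
  assert (Heps1 : eps <= 1) by (unfold eps; apply Rmin_l).
  assert (Heps2 : eps <= (1/2 - K0)/2) by (unfold eps; apply Rmin_r).
  exists (ln (1 + eps)). split.
  { rewrite <- ln_1. apply ln_increasing; lra. }
  intros c e1 e2 rho Hf Hr0 Hr i j k l Hi Hj Hk Hl _ _ _ Hdij Hdkl p Hs1 Hs2.
  assert (He : exp rho < 1 + eps).
  { rewrite <- (exp_ln (1+eps)) by lra. apply exp_increasing; exact Hr. }
  assert (He1 : 1 < exp rho) by (rewrite <- exp_0; apply exp_increasing; lra).
  assert (Hsh : 0 <= sinh rho < eps).
  { unfold sinh. rewrite exp_Ropp.
    set (e := exp rho) in *.
    assert (Hie : 0 < / e) by (apply Rinv_0_lt_compat; lra).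
    assert (Hie1 : e * / e = 1) by (field; lra).
    split; nra. }
  assert (HS : (1 + sinh rho * sinh rho) * K0 < 1/2) by nra.
  assert (Hij : 1 - cos (2*PI*INR i/INR N - 2*PI*INR j/INR N) <= K0).
  { pose proof (cos_diag N i j m Hi Hj Hdij H6). unfold K0, x. lra. }
  assert (Hkl : 1 - cos (2*PI*INR k/INR N - 2*PI*INR l/INR N) <= K0).
  { pose proof (cos_diag N k l m Hk Hl Hdkl H6). unfold K0, x. lra. }
  destruct (pair_angle N c e1 e2 rho K0 i j p Hf HS Hij Hs1) as [Ai Aj].
  destruct (pair_angle N c e1 e2 rho K0 k l p Hf HS Hkl Hs2) as [Ak Al].
  unfold internal_angle. apply list_bound.
  intros y Hy. apply in_map_iff in Hy. destruct Hy as [q [Eq Hq]]. subst y.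
  apply filter_In in Hq. destruct Hq as [Hq _].
  apply oangle_bounds.
  simpl in Hq. destruct Hq as [<-|[<-|[<-|[<-|[]]]]]; assumption.
Qed.
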